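(* Let $T\in(\mathbb{C}^n)^{\otimes3}$ be an $r$-diagonalisable symmetric tensor with slices $T_1,\dots,T_n$, and let $T^{(a)}=\sum_{i=1}^na_iT_i$ be a linear combination of the slices of rank $r$ such that $\kappa_F(T^{(a)})<k_F$ (with $k_F>0$). Let $\tilde A=2k_FT^{(a)}(T^{(a)})^*$ and let $\sigma_1\ge\dots\ge\sigma_r$ be its $r$ nonzero eigenvalues. Then $\sigma_r\ge 2/r$.
   Context: $T$ is $r$-diagonalisable if $T=\sum_{i=1}^ru_i^{\otimes3}$ with $u_1,\dots,u_r\in\mathbb{C}^n$ linearly independent. The $k$-th slice of $T$ is $T_k=(T_{ijk})_{i,j}$. For a matrix $M$, $\kappa_F(M)=\|M\|_F^2+\|M^\dagger\|_F^2$ with $M^\dagger$ the Moore–Penrose pseudoinverse. *)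

(* Defs.v *)
From HB Require Import structures.
From Stdlib Require Import ClassicalEpsilon.
From mathcomp Require Import all_boot all_order all_algebra.
Set Implicit Arguments. Unset Strict Implicit. Unset Printing Implicit Defensive.
Import Order.TTheory GRing.Theory Num.Theory.
Local Open Scope ring_scope.

(* The complex field is modelled by an arbitrary numClosedFieldType C
   (algebraically closed field with conjugation x^* and norm |.|). *)

Definition tensor3 (C : Type) (n : nat) := 'I_n -> 'I_n -> 'I_n -> C.

(* T is r-diagonalisable: T = sum_{l<r} u_l^{⊗3}, with u_1..u_r linearly
   independent (the rows of U : 'M_(r,n), i.e. row_free U). *)
Definition r_diagonalisable (C : numClosedFieldType) (n r : nat) (T : tensor3 C n) :=
  exists U : 'M[C]_(r, n), row_free U /\
    forall i j k, T i j k = \sum_(l < r) U l i * U l j * U l k.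

Definition slice (C : Type) (n : nat) (T : tensor3 C n) (k : 'I_n) : 'M[C]_n :=
  \matrix_(i, j) T i j k.

Definition adjmx (C : numClosedFieldType) (m p : nat) (M : 'M[C]_(m, p)) : 'M[C]_(p, m) :=
  (map_mx (fun x => x^*) M)^T.

Definition frob2 (C : numClosedFieldType) (m p : nat) (M : 'M[C]_(m, p)) : C :=
  \sum_(i < m) \sum_(j < p) `|M i j| ^+ 2.

Definition is_pinv (C : numClosedFieldType) (m p : nat) (M : 'M[C]_(m, p)) (X : 'M[C]_(p, m)) :=
  [/\ M *m X *m M = M, X *m M *m X = X,
      adjmx (M *m X) = M *m X & adjmx (X *m M) = X *m M].

(* Moore–Penrose pseudoinverse (the unique solution of the Penrose equations) *)
Definition pinv (C : numClosedFieldType) (m p : nat) (M : 'M[C]_(m, p)) : 'M[C]_(p, m) :=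
  epsilon (inhabits 0) (is_pinv M).

Definition kappaF (C : numClosedFieldType) (m p : nat) (M : 'M[C]_(m, p)) : C :=
  frob2 M + frob2 (pinv M).

Definition slicecomb (C : numClosedFieldType) (n : nat) (T : tensor3 C n) (a : 'I_n -> C) : 'M[C]_n :=
  \sum_(k < n) a k *: slice T k.

(* Main.v *)
Require Import Defs.
From HB Require Import structures.
From Stdlib Require Import ClassicalEpsilon.
From mathcomp Require Import all_boot all_order all_algebra ring.
Import Order.TTheory GRing.Theory Num.Theory.
Local Open Scope ring_scope.
Set Implicit Arguments. Unset Strict Implicit.

Section S.
Variable C : numClosedFieldType.

Lemma adjmxM m n p (A : 'M[C]_(m, n)) (B : 'M[C]_(n, p)) :
  adjmx (A *m B) = adjmx B *m adjmx A.
Proof. by rewrite /adjmx (map_mxM (@Num.conj C)) trmx_mul. Qed.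

Lemma adjmxK m n (A : 'M[C]_(m, n)) : adjmx (adjmx A) = A.
Proof. by apply/matrixP => i j; rewrite !mxE conjCK. Qed.

Lemma adjmx_inv n (A : 'M[C]_n) : adjmx (invmx A) = invmx (adjmx A).
Proof. by rewrite /adjmx (map_invmx (@Num.conj C)) trmx_inv. Qed.

Lemma adjmx_rank m n (A : 'M[C]_(m, n)) : \rank (adjmx A) = \rank A.
Proof. by rewrite /adjmx mxrank_tr (mxrank_map (@Num.conj C)). Qed.

Lemma adjmxZ m n a (A : 'M[C]_(m, n)) : adjmx (a *: A) = a^* *: adjmx A.
Proof. by apply/matrixP => i j; rewrite !mxE rmorphM. Qed.

Lemma gram00 n (u : 'rV[C]_n) : (u *m adjmx u) 0 0 = frob2 u.
Proof.
rewrite /frob2 big_ord1 !mxE; apply: eq_bigr => j _.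
by rewrite !mxE normCK.
Qed.

Lemma frob2_ge0 m n (A : 'M[C]_(m, n)) : 0 <= frob2 A.
Proof. by apply: sumr_ge0 => i _; apply: sumr_ge0 => j _; apply: exprn_ge0. Qed.

Lemma frob2_eq0 n (u : 'rV[C]_n) : frob2 u = 0 -> u = 0.
Proof.
rewrite /frob2 big_ord1 => /psumr_eq0P H; apply/rowP => j.
have := H (fun j' _ => exprn_ge0 2 (normr_ge0 _)) j isT.
move=> /eqP; rewrite expf_eq0 /= normr_eq0.
by move=> /eqP ->; rewrite mxE.
Qed.

Lemma gram_unit k p (D : 'M[C]_(k, p)) : row_free D -> D *m adjmx D \in unitmx.
Proof.
move=> fD; rewrite -row_free_unit; apply: inj_row_free => v.
move=> /(congr1 (fun X => X *m adjmx v)).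
rewrite mul0mx mulmxA -(mulmxA (v *m D)) -adjmxM => /(congr1 (fun X : 'M[C]_1 => X 0 0)).
rewrite gram00 mxE => /frob2_eq0 /eqP; rewrite mulmx_free_eq0 //.
by move/eqP.
Qed.

Lemma pinv_fact m p k (B : 'M[C]_(m, k)) (D : 'M[C]_(k, p)) :
  row_free D -> row_free (adjmx B) -> exists X, is_pinv (B *m D) X.
Proof.
move=> fD fB.
have uD := gram_unit fD.
have uB := gram_unit fB; rewrite adjmxK in uB.
set GD := D *m adjmx D in uD *; set GB := adjmx B *m B in uB *.
have hGD : adjmx (invmx GD) = invmx GD by rewrite adjmx_inv /GD adjmxM adjmxK.
have hGB : adjmx (invmx GB) = invmx GB by rewrite adjmx_inv /GB adjmxM adjmxK.
exists (adjmx D *m invmx GD *m invmx GB *m adjmx B).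
have MX : (B *m D) *m (adjmx D *m invmx GD *m invmx GB *m adjmx B) = B *m invmx GB *m adjmx B.
  by rewrite !mulmxA -(mulmxA B D) -/GD -(mulmxA B GD) mulmxV // mulmx1.
have XM : (adjmx D *m invmx GD *m invmx GB *m adjmx B) *m (B *m D) = adjmx D *m invmx GD *m D.
  by rewrite !mulmxA -(mulmxA _ (adjmx B) B) -/GB -(mulmxA _ (invmx GB)) mulVmx // mulmx1.
split.
- by rewrite MX !mulmxA -(mulmxA _ (adjmx B) B) -/GB -(mulmxA _ (invmx GB)) mulVmx // mulmx1.
- rewrite XM !mulmxA -(mulmxA _ D (adjmx D)) -/GD -(mulmxA _ (invmx GD) GD) mulVmx // mulmx1.
  done.
- by rewrite MX !adjmxM adjmxK hGB mulmxA.
- by rewrite XM !adjmxM adjmxK hGD mulmxA.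
Qed.

Lemma pinv_ex m p (M : 'M[C]_(m, p)) : exists X, is_pinv M X.
Proof.
rewrite -(mulmx_base M); apply: pinv_fact; first exact: row_base_free.
by rewrite /row_free adjmx_rank; apply: col_base_full.
Qed.

Lemma pinvP m p (M : 'M[C]_(m, p)) : is_pinv M (pinv M).
Proof. by rewrite /pinv; apply: epsilon_spec; apply: pinv_ex. Qed.

Lemma cs_real m (p q : 'I_m -> C) : (forall i, 0 <= p i) -> (forall i, 0 <= q i) ->
  (\sum_i p i * q i) ^+ 2 <= (\sum_i p i ^+ 2) * (\sum_i q i ^+ 2).
Proof.
move=> p0 q0.
set P := \sum_i p i ^+ 2; set Q := \sum_i q i ^+ 2; set s := \sum_i p i * q i.
have P0 : 0 <= P by apply: sumr_ge0 => i _; apply: exprn_ge0.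
have s0 : 0 <= s by apply: sumr_ge0 => i _; apply: mulr_ge0.
have [Pz|Pn] := eqVneq P 0.
  have pz : forall i, p i = 0.
    move: Pz => /psumr_eq0P H i.
    have := H (fun i _ => exprn_ge0 2 (p0 i)) i isT.
    by move/eqP; rewrite expf_eq0 /= => /eqP.
  rewrite (_ : s = 0) ?expr0n ?Pz ?mul0r //.
  by apply: big1 => i _; rewrite pz mul0r.
have Ppos : 0 < P by rewrite lt_def Pn P0.
have H : 0 <= \sum_i (s * p i - P * q i) ^+ 2.
  apply: sumr_ge0 => i _; apply: real_exprn_even_ge0 => //.
  by apply: rpredB; apply: rpredM; apply: ger0_real.
have E : \sum_i (s * p i - P * q i) ^+ 2 = P * (P * Q - s ^+ 2).
  rewrite (eq_bigr (fun i => s ^+ 2 * p i ^+ 2 - (2 * s * P) * (p i * q i) + P ^+ 2 * q i ^+ 2)); last by move=> i _; ring.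
  rewrite big_split sumrB /= -!mulr_sumr -/P -/Q -/s. ring.
by move: H; rewrite E pmulr_rge0 // subr_ge0.
Qed.

Lemma frob2_mul m p (u : 'rV[C]_m) (X : 'M[C]_(m, p)) :
  frob2 (u *m X) <= frob2 u * frob2 X.
Proof.
rewrite /frob2 !big_ord1 (exchange_big _ _ _ _ _ (fun i j => `|X i j| ^+ 2)) /= mulr_sumr.
apply: ler_sum => j _; rewrite mxE.
have := @cs_real m (fun i => `|u 0 i|) (fun i => `|X i j|) (fun i => normr_ge0 _) (fun i => normr_ge0 _).
rewrite /=; apply: le_trans.
apply: lerXn2r; rewrite ?nnegrE ?normr_ge0 //.
  by apply: sumr_ge0 => i _; rewrite mulr_ge0.
apply: (le_trans (ler_norm_sum _ _ _)). by apply: ler_sum => i _; rewrite normrM.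
Qed.

End S.
Unset Implicit Arguments.

Theorem lemma4p15 (C : numClosedFieldType) (n r : nat) (T : tensor3 C n)
  (a : 'I_n -> C) (kF : C) :
  r_diagonalisable r T ->
  \rank (slicecomb T a) = r ->
  0 < kF ->
  kappaF (slicecomb T a) < kF ->
  forall sigma : C,
    eigenvalue ((2 * kF) *: (slicecomb T a *m adjmx (slicecomb T a))) sigma ->
    sigma != 0 ->
    2 / r%:R <= sigma.
Proof.
move=> _ _ kF0 hk sigma /eigenvalueP [v hv vn0] sn0.
move: hk hv; set M := slicecomb T a => hk hv.
have [P1 P2 P3 P4] := pinvP M.
move: hk; rewrite /kappaF; set X := pinv M => hk.
have k2p : 0 < 2 * kF by rewrite mulr_gt0 // ltr0n.
have k2 : 2 * kF != 0 by apply: lt0r_neq0.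
set lam := sigma / (2 * kF).
have hv' : v *m (M *m adjmx M) = lam *: v.
  move: hv; rewrite -scalemxAr => /(congr1 (fun w => (2 * kF)^-1 *: w)).
  by rewrite !scalerA mulVf // scale1r => ->; rewrite /lam mulrC.
have lam0 : lam != 0 by rewrite /lam mulf_neq0 // invr_eq0.
set w := v *m M.
have hw : w *m adjmx w = lam *: (v *m adjmx v).
  by rewrite /w adjmxM mulmxA -(mulmxA v M (adjmx M)) hv' -scalemxAl.
have ev : v = lam^-1 *: (w *m adjmx M).
  by rewrite /w -mulmxA hv' scalerA mulVf // scale1r.
have vX : w *m X = v.
  rewrite /w -mulmxA {1}ev -scalemxAl -mulmxA -P3 -adjmxM P1.
  by rewrite -ev.
have fv : 0 < frob2 v.
  rewrite lt_def frob2_ge0 andbT; apply/eqP => /frob2_eq0 h.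
  by rewrite h eqxx in vn0.
have fw : frob2 w = lam * frob2 v by rewrite -!gram00 hw mxE.
have cs : frob2 v <= frob2 w * frob2 X by rewrite -{1}vX frob2_mul.
have lam_ge0 : 0 <= lam.
  rewrite (_ : lam = frob2 w / frob2 v) ?divr_ge0 ?frob2_ge0 //.
  by rewrite fw mulfK // lt0r_neq0.
have hX : frob2 X <= kF.
  rewrite -[frob2 X]add0r; apply: le_trans (ltW hk).
  by rewrite lerD2r frob2_ge0.
have h1 : 1 <= lam * frob2 X.
  have : frob2 v * 1 <= frob2 v * (lam * frob2 X).
    by rewrite mulr1 mulrA [frob2 v * lam]mulrC -fw.
  by rewrite ler_pM2l.
have lamk : 1 <= lam * kF by apply: le_trans h1 (ler_wpM2l lam_ge0 hX).
have es : sigma = 2 * (lam * kF).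
  rewrite /lam; field; by rewrite lt0r_neq0.
rewrite es; apply: (@le_trans _ _ 2).
  case: r => [|r']; first by rewrite invr0 mulr0 ler0n.
  by rewrite ler_pdivrMr ?ltr0Sn // ler_peMr // ler1n.
by rewrite -{1}[2]mulr1 ler_pM2l // ltr0n.
Qed.
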